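(* Let $S$ be an $(l,r)$-framed algebra and define $(-,-):S\times S\to\mathbb{C}$ by $(a,b)1=(-1)^{s(\lambda)}a\cdot_0 b$ for $a\in S_\lambda$, $b\in S$ (bilinearly extended). Then for all $\lambda^i$ and $a_i\in S_{\lambda^i}$: (1) $S_{\lambda^1}$ and $S_{\lambda^2}$ are orthogonal if $\lambda^1\ne\lambda^2$; (2) the form is symmetric; (3) $(a_1\cdot a_2,a_3)=(-1)^{s(\lambda^1)}(a_2,a_1\cdot a_3)$; (4) the form is non-degenerate if and only if $S$ is simple.
   Context: Let $\mathrm{IS}=\{0,\frac12,\frac1{16}\}$ with fusion rule $\star$ (values are subsets): $0\star h=h\star0=\{h\}$, $\frac12\star\frac12=\{0\}$, $\frac12\star\frac1{16}=\frac1{16}\star\frac12=\{\frac1{16}\}$, $\frac1{16}\star\frac1{16}=\{0,\frac12\}$; $A(h_0,h_1,h_2,h_3)=\{h: h\in h_2\star h_3,\ h_0\in h_1\star h\}$. For $h\in A(h_0,h_1,h_2,h_3)$, $h'\in A(h_0,h_2,h_1,h_3)$ define $B^{h,h'}_{h_0,h_1,h_2,h_3}$: $B_{*,0,*,*}=B_{*,*,0,*}=1$; $B_{*,\frac12,\frac12,*}=-1$; $B_{a,\frac12,\frac1{16},a'}=B_{a,\frac1{16},\frac12,a'}=i$ if $a$ or $a'$ is $\frac12$, else $-i$; $B^{b,b'}_{a,\frac1{16},\frac1{16},a'}=e^{-\pi i/8}\cdot\{1$ if $a,a'\ne\frac1{16},a=a'$; $i$ if $a,a'\neq\frac1{16},a\ne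 a'$; $\frac{1+i}2$ if $a=a'=\frac1{16},b=b'$; $\frac{1-i}2$ if $a=a'=\frac1{16},b\neq b'\}$. $\mathrm{IS}^{(l,r)}=\mathrm{IS}^l\times\mathrm{IS}^r$, $\lambda=(h_1,..,h_l,\bar h_1,..,\bar h_r)$, $s(\lambda)=\sum h_i-\sum\bar h_j$; $\star$, $A$ componentwise; $B^{\lambda,\lambda'}_{\lambda^0,\dots,\lambda^3}=\prod_{i\le l}B^{h_i,h'_i}_{h^0_i,\dots,h^3_i}\prod_{j\le r}\overline{B^{\bar h_j,\bar h'_j}_{\bar h^0_j,\dots,\bar h^3_j}}$. An $(l,r)$-framed algebra: finite-dimensional $\mathrm{IS}^{(l,r)}$-graded $S=\bigoplus S_\lambda$ over $\mathbb{C}$ with bilinear product, nonzero $1\in S_0$ ($0=(0,\dots,0)$), $a\cdot_\lambda b$ the $S_\lambda$-component of $a\cdot b$, satisfying (FA1) $S_\lambda=0$ unless $s(\lambda)\in\mathbb{Z}$; (FA2) $S_0=\mathbb{C}1$, $1$ a two-sided unit; (FA3) $S_{\lambda^1}\cdot S_{\lambda^2}\subset\bigoplus_{\lambda\in\lambda^1\star\lambda^2}S_\lambda$; (FA4) $a_2\cdot_{\lambda^0}(a_1\cdot_{\lambda'}a_3)=\sum_{\lambda\in A(\lambda^0,\lambda^1,\lambda^2,\lambda^3)}B^{\lambda,\lambda'}_{\lambda^0,\lambda^1,\lambda^2,\lambda^3}a_1\cdot_{\lambda^0}(a_2\cdot_\lambda a_3)$ for $a_i\in S_{\lambda^i}$,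 $\lambda'\in A(\lambda^0,\lambda^2,\lambda^1,\lambda^3)$. An ideal is a graded subspace $M$ with $S\cdot M\subset M$; $S$ is simple if its only ideals are $0$ and $S$. *)

(* Defs.v *)
From HB Require Import structures.
From mathcomp Require Import all_boot all_order all_algebra.
Set Implicit Arguments. Unset Strict Implicit. Unset Printing Implicit Defensive.
Import Order.TTheory GRing.Theory Num.Theory.
Local Open Scope ring_scope.

Inductive IS := I0 | Ihalf | I16.

Definition IS_to (x : IS) : 'I_3 :=
  match x with I0 => inord 0 | Ihalf => inord 1 | I16 => inord 2 end.
Definition IS_of (i : 'I_3) : IS :=
  match val i with 0%N => I0 | 1%N => Ihalf | _ => I16 end.
Lemma IS_K : cancel IS_to IS_of.
Proof. by case; rewrite /IS_of /= inordK. Qed.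
HB.instance Definition _ := Finite.copy IS (can_type IS_K).

Definition hval (h : IS) : rat :=
  match h with I0 => 0 | Ihalf => 1 / 2 | I16 => 1 / 16 end.

(* fusion rule: fus h1 h2 h  <=>  h \in h1 * h2 *)
Definition fus (h1 h2 h : IS) : bool :=
  match h1, h2 with
  | I0, _ => h == h2
  | _, I0 => h == h1
  | Ihalf, Ihalf => h == I0
  | Ihalf, I16 | I16, Ihalf => h == I16
  | I16, I16 => (h == I0) || (h == Ihalf)
  end.

Definition Aset1 (h0 h1 h2 h3 h : IS) : bool := fus h2 h3 h && fus h1 h h0.

Section Bdef.
Variable C : numClosedFieldType.

(* e^{-pi i/8}: 8.-root (-1) is e^{pi i/8} (the 8th root of -1 with maximal
   real part among those with nonnegative imaginary part). *)
Definition eps8 : C := (8.-root (-1 : C))^-1.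

(* B^{h,h'}_{a,h1,h2,a'} ; value 0 in the combinations not covered by the
   paper (they never occur with h \in A(..), h' \in A(..)). *)
Definition Bc (h h' a h1 h2 a' : IS) : C :=
  match h1, h2 with
  | I0, _ => 1
  | _, I0 => 1
  | Ihalf, Ihalf => -1
  | Ihalf, I16 | I16, Ihalf =>
      if (a == Ihalf) || (a' == Ihalf) then 'i else - 'i
  | I16, I16 =>
      eps8 * (if (a != I16) && (a' != I16) then
                (if a == a' then 1 else 'i)
              else if (a == I16) && (a' == I16) then
                (if h == h' then (1 + 'i) / 2 else (1 - 'i) / 2)
              else 0)
  end.
End Bdef.

Definition Lam (l r : nat) : finType :=
  ({ffun 'I_l -> IS} * {ffun 'I_r -> IS})%type.

Definition lam0 (l r : nat) : Lam l r := ([ffun => I0], [ffun => I0]).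

Definition sLam l r (x : Lam l r) : rat :=
  (\sum_(i < l) hval (x.1 i)) - (\sum_(j < r) hval (x.2 j)).

Definition starL l r (x1 x2 x : Lam l r) : bool :=
  [forall i, fus (x1.1 i) (x2.1 i) (x.1 i)] &&
  [forall j, fus (x1.2 j) (x2.2 j) (x.2 j)].

Definition AL l r (x0 x1 x2 x3 x : Lam l r) : bool :=
  [forall i, Aset1 (x0.1 i) (x1.1 i) (x2.1 i) (x3.1 i) (x.1 i)] &&
  [forall j, Aset1 (x0.2 j) (x1.2 j) (x2.2 j) (x3.2 j) (x.2 j)].

Definition BL (C : numClosedFieldType) l r (x x' x0 x1 x2 x3 : Lam l r) : C :=
  (\prod_(i < l) Bc C (x.1 i) (x'.1 i) (x0.1 i) (x1.1 i) (x2.1 i) (x3.1 i)) *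
  (\prod_(j < r) (Bc C (x.2 j) (x'.2 j) (x0.2 j) (x1.2 j) (x2.2 j) (x3.2 j))^*).

(* (-1)^{s(lambda)}; only relevant when s(lambda) is an integer (FA1) *)
Definition signL (C : numClosedFieldType) l r (x : Lam l r) : C :=
  (-1) ^ (numq (sLam x)).

Section Framed.
Variables (C : numClosedFieldType) (l r : nat) (V : vectType C).
Variables (Sg : Lam l r -> {vspace V}) (mul : V -> V -> V) (one : V).

Definition gcomp (x : Lam l r) : 'End(V) :=
  sumv_pi (\sum_(mu : Lam l r) Sg mu)%VS x.

Definition mulc (x : Lam l r) (a b : V) : V := gcomp x (mul a b).

Definition framed_algebra : Prop :=
  [/\ (
      ((\sum_(mu : Lam l r) Sg mu)%VS = fullv /\ directv (\sum_(mu : Lam l r) Sg mu)) /\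
      ((forall (k : C) a a' b, mul (k *: a + a') b = k *: mul a b + mul a' b) /\
       (forall (k : C) a b b', mul a (k *: b + b') = k *: mul a b + mul a b'))),
      (* FA1 *)
      (forall x, sLam x \isn't a Num.int -> Sg x = 0%VS),
      [/\ one != 0, Sg (lam0 l r) = <[one]>%VS &
          (forall a, mul one a = a /\ mul a one = a)],
      (forall x1 x2 a1 a2, a1 \in Sg x1 -> a2 \in Sg x2 ->
          mul a1 a2 \in (\sum_(x | starL x1 x2 x) Sg x)%VS) &
      (* FA4 *)
      (forall x0 x1 x2 x3 x' a1 a2 a3,
          a1 \in Sg x1 -> a2 \in Sg x2 -> a3 \in Sg x3 -> AL x0 x2 x1 x3 x' ->
          mulc x0 a2 (mulc x' a1 a3) =
          \sum_(x | AL x0 x1 x2 x3 x) BL C x x' x0 x1 x2 x3 *: mulc x0 a1 (mulc x a2 a3))].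

(* the scalar c with c * 1 = v, for v \in S_0 = C 1 *)
Definition scal0 (v : V) : C := coord [tuple one] ord0 v.

Definition bform (a b : V) : C :=
  \sum_(x : Lam l r) signL C x * scal0 (mulc (lam0 l r) (gcomp x a) b).

Definition graded_subspace (M : {vspace V}) : Prop :=
  M = (\sum_(x : Lam l r) (M :&: Sg x))%VS.

Definition graded_ideal (M : {vspace V}) : Prop :=
  graded_subspace M /\ forall a m, m \in M -> mul a m \in M.

Definition simple_alg : Prop :=
  forall M, graded_ideal M -> M = 0%VS \/ M = fullv.

Definition nondeg_bform : Prop :=
  forall a, (forall b, bform a b = 0) -> a = 0.

End Framed.

(* Main.v *)
Require Import Defs.
From HB Require Import structures.
From mathcomp Require Import all_boot all_order all_algebra.
From mathcomp Require Import zify ring.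
Set Implicit Arguments. Unset Strict Implicit. Unset Printing Implicit Defensive.
Import Order.TTheory GRing.Theory Num.Theory.
Local Open Scope ring_scope.

Section Eps.
Variable C : numClosedFieldType.

Lemma y8 : (8.-root (-1 : C)) ^+ 8 = -1.
Proof. exact: rootCK. Qed.

Lemma y4 : (8.-root (-1 : C)) ^+ 4 = 'i.
Proof.
set y := 8.-root (-1 : C).
have u2 : (y ^+ 4) ^+ 2 = -1 by rewrite -exprM y8.
have : (y ^+ 4 - 'i) * (y ^+ 4 + 'i) = 0.
  by rewrite mulrDr !mulrBl -!expr2 u2 sqrCi mulrC addrA subrK subrr.
move/eqP; rewrite mulf_eq0 => /orP[]; first by rewrite subr_eq0 => /eqP.
rewrite addr_eq0 => /eqP Hu; exfalso.
set a := 'Re y; set b := 'Im y.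
have Ra : a \is Num.real by apply: Creal_Re.
have Rb : b \is Num.real by apply: Creal_Im.
have Dy : y = a + 'i * b by apply: Crect.
have hb : 0 <= b by apply: Im_rootC_ge0.
have yc : y^* = a + 'i * (- b) by rewrite Dy conjC_rect // mulrN.
have y8c : (y^*) ^+ 8 = -1 by rewrite -rmorphXn y8 rmorphN1.
have ha : 0 <= a.
  have z8 : (- y^*) ^+ 8 = -1 by rewrite exprNn y8c -signr_odd /= expr0 mul1r.
  have Rz : 'Re (- y^*) = - a by rewrite raddfN /= Re_conj.
  have Iz : 'Im (- y^*) = b by rewrite raddfN /= Im_conj opprK.
  have := rootC_Re_max (isT : (0 < 8)%N) z8; rewrite Iz Rz -/y -/a => /(_ hb).
  by rewrite -subr_ge0 opprK -mulr2n pmulrn_lge0.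
have hba : b <= a.
  have z8 : ('i * y^*) ^+ 8 = -1.
    by rewrite exprMn y8c -[8%N]/(2 * 4)%N exprM sqrCi -signr_odd /= expr0 mul1r.
  have Dz : 'i * y^* = b + 'i * a.
    by rewrite yc mulrDr mulrA mulrN mulCii mulN1r opprK addrC.
  have := rootC_Re_max (isT : (0 < 8)%N) z8.
  rewrite Dz Re_rect ?Im_rect // -/y -/a; exact.
have Dy2 : y ^+ 2 = (a * a - b * b) + 'i * (a * b + a * b).
  by rewrite expr2 Dy mulC_rect.
have : 'Im (y ^+ 4) = - 1 by rewrite Hu raddfN /= Im_i.
have Rp : a * a - b * b \is Num.real by rewrite rpredB ?rpredM.
have Rq : a * b + a * b \is Num.real by rewrite rpredD ?rpredM.
have RP := rpredB (rpredM Rp Rp) (rpredM Rq Rq).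
have RQ := rpredD (rpredM Rp Rq) (rpredM Rp Rq).
rewrite (exprM y 2 2) Dy2 expr2 mulC_rect (Im_rect RP RQ) => H.
have h1 : 0 <= a * a - b * b by rewrite subr_ge0 ler_pM.
have h2 : 0 <= a * b + a * b by rewrite addr_ge0 // mulr_ge0.
have : 0 <= (a * a - b * b) * (a * b + a * b) + (a * a - b * b) * (a * b + a * b).
  by rewrite addr_ge0 // mulr_ge0.
by rewrite H ler0N1.
Qed.

Definition E (z : int) : C := eps8 C ^ z.

Lemma e_neq0 : eps8 C != 0.
Proof.
rewrite /eps8 invr_eq0; apply/eqP => h.
by have := y8; rewrite h expr0n /= => /eqP; rewrite eq_sym oppr_eq0 oner_eq0.
Qed.

Lemma e8 : eps8 C ^+ 8 = -1.
Proof. by rewrite /eps8 exprVn y8 invrN1. Qed.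

Lemma e4 : eps8 C ^+ 4 = - 'i.
Proof. by rewrite /eps8 exprVn y4 invCi. Qed.

Lemma ED a b : E (a + b) = E a * E b.
Proof. exact: expfzDr e_neq0. Qed.

Lemma E0 : E 0 = 1. Proof. by []. Qed.
Lemma E1 : E 1 = eps8 C. Proof. by []. Qed.

Lemma E16 z : E (16 * z) = 1.
Proof.
rewrite /E -exprz_exp.
have -> : eps8 C ^ (16 : int) = 1.
  by rewrite -[16%N]/(8 * 2)%N /= -[_ ^ _]/(eps8 C ^+ (8 * 2)) exprM e8 expr2 mulN1r opprK.
by rewrite exp1rz.
Qed.

Lemma Emod a b : ((a - b) %% 16 == 0)%Z -> E a = E b.
Proof.
move=> /eqP h; have := divz_eq (a - b) 16; rewrite h addr0 => hab.
have -> : a = b + 16 * ((a - b) %/ 16)%Z by rewrite mulrC -hab addrC subrK.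
by rewrite ED E16 mulr1.
Qed.

Lemma iE : 'i = E 12.
Proof.
rewrite /E -[_ ^ _]/(eps8 C ^+ (8 + 4)) exprD e8 e4.
by rewrite mulN1r opprK.
Qed.
Lemma N1E : -1 = E 8. Proof. by rewrite /E -e8. Qed.
Lemma NiE : - 'i = E 4. Proof. by rewrite /E -e4. Qed.

Lemma conj_e : (eps8 C)^* = (eps8 C)^-1.
Proof.
have n1 : `|eps8 C| = 1.
  by rewrite /eps8 normfV norm_rootC normrN1 rootC1 ?invr1.
have := normCK (eps8 C); rewrite n1 expr1n => h.
by apply: (mulfI e_neq0); rewrite -h divff // e_neq0.
Qed.

Lemma conjE z : (E z)^* = E (- z).
Proof. by rewrite /E fmorphXz /= conj_e exprz_inv. Qed.

Lemma prodE (I : finType) (P : pred I) (f : I -> int) :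
  \prod_(i | P i) E (f i) = E (\sum_(i | P i) f i).
Proof. by rewrite (big_morph E ED E0). Qed.

End Eps.

Definition IS_eqb (a b : IS) := match a, b with I0,I0|Ihalf,Ihalf|I16,I16 => true | _,_ => false end.
Lemma IS_eqE a b : (a == b) = IS_eqb a b.
Proof. by case: a; case: b; rewrite ?eqxx //; apply/negbTE/eqP. Qed.

Definition w (h : IS) : int := match h with I0 => 0 | Ihalf => 8 | I16 => 1 end.

Definition kap (h1 h2 h3 : IS) : int :=
  match h1, h2, h3 with
  | I0, I0, I0 => 0
  | I0, Ihalf, Ihalf => 8
  | I0, I16, I16 => 1
  | Ihalf, I0, Ihalf => 8
  | Ihalf, Ihalf, I0 => -8
  | Ihalf, I16, I16 => -3
  | I16, I0, I16 => 1
  | I16, Ihalf, I16 => -3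
  | I16, I16, I0 => -1
  | I16, I16, Ihalf => 11
  | _, _, _ => 0
  end.

Lemma kapP h1 h2 h3 : fus h1 h2 h3 -> 2 * kap h1 h2 h3 = 3 * w h3 - w h1 - w h2.
Proof. by case: h1; case: h2; case: h3; rewrite /fus ?IS_eqE. Qed.

Section Scal.
Variable C : numClosedFieldType.

Lemma Bc_sym h : Bc C h h I0 h h I0 = E C (w h).
Proof.
case: h; rewrite /Bc ?IS_eqE /= ?E0 //; first by rewrite N1E.
by rewrite mulr1.
Qed.

Lemma Bc_assoc h1 h2 h3 : fus h1 h2 h3 ->
  Bc C h1 h3 I0 h1 h3 h2 * Bc C h3 h2 h1 h2 h3 I0 = E C (kap h1 h2 h3) * Bc C h1 h2 I0 h1 h2 h3.
Proof.
case: h1; case: h2; case: h3; rewrite /fus ?IS_eqE //= => _;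
rewrite /Bc ?IS_eqE /= ?NiE ?iE ?N1E -?E0 -?E1 -?ED; by apply: Emod.
Qed.
End Scal.

Definition nL l r (x : Lam l r) : int := \sum_(i < l) w (x.1 i) - \sum_(j < r) w (x.2 j).

Lemma hvalE h : hval h = (w h)%:~R / 16.
Proof. by case: h. Qed.

Lemma sLamE l r (x : Lam l r) : sLam x = (nL x)%:~R / 16.
Proof.
rewrite /sLam /nL; under eq_bigr do rewrite hvalE; under [X in _ - X]eq_bigr do rewrite hvalE.
by rewrite -!mulr_suml rmorphB /= !rmorph_sum mulrBl.
Qed.

Lemma sLam_int (C : numClosedFieldType) l r (x : Lam l r) : sLam x \is a Num.int ->
  exists m : int, nL x = 16 * m /\ signL C x = E C (8 * m).
Proof.
case/intrP => m hm; exists m; split.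
  apply/eqP; rewrite -(eqr_int rat) rmorphM /=.
  by move: hm; rewrite sLamE => /(canRL (mulfK _)) -> //; rewrite mulrC.
by rewrite /signL hm numq_int N1E /E exprz_exp.
Qed.

Lemma Eeq (C : numClosedFieldType) a b k : a = b + 16 * k -> E C a = E C b.
Proof. by move=> ->; rewrite ED E16 mulr1. Qed.

Lemma BL_sym (C : numClosedFieldType) l r (x : Lam l r) : sLam x \is a Num.int ->
  BL C x x (lam0 l r) x x (lam0 l r) = 1.
Proof.
case/(sLam_int C) => m [hn _].
rewrite /BL /lam0 /=.
under eq_bigr do rewrite ffunE Bc_sym.
under [X in _ * X]eq_bigr do rewrite ffunE Bc_sym conjE.
rewrite !prodE -ED sumrN.
have -> : \sum_(i < l) w (x.1 i) - \sum_(i < r) w (x.2 i) = 16 * m by rewrite -hn.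
exact: E16.
Qed.

Lemma sum_kap l (x1 x2 x3 : {ffun 'I_l -> IS}) :
  (forall i, fus (x1 i) (x2 i) (x3 i)) ->
  2 * \sum_(i < l) kap (x1 i) (x2 i) (x3 i) =
  3 * \sum_(i < l) w (x3 i) - \sum_(i < l) w (x1 i) - \sum_(i < l) w (x2 i).
Proof.
move=> h; rewrite mulr_sumr (eq_bigr _ (fun i _ => kapP (h i))).
by rewrite !sumrB mulr_sumr.
Qed.

Lemma BL_assoc (C : numClosedFieldType) l r (x1 x2 x3 : Lam l r) :
  sLam x1 \is a Num.int -> sLam x2 \is a Num.int -> sLam x3 \is a Num.int ->
  starL x1 x2 x3 ->
  signL C x3 * (BL C x1 x3 (lam0 l r) x1 x3 x2 * BL C x3 x2 x1 x2 x3 (lam0 l r)) =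
  signL C x1 * signL C x2 * BL C x1 x2 (lam0 l r) x1 x2 x3.
Proof.
case/(sLam_int C) => m1 [hn1 hs1]; case/(sLam_int C) => m2 [hn2 hs2].
case/(sLam_int C) => m3 [hn3 hs3].
case/andP => /forallP hL /forallP hR.
rewrite /BL /lam0 /= mulrACA -!big_split /=.
under eq_bigr do rewrite !ffunE Bc_assoc //.
rewrite [\prod_(i < r) _](eq_bigr (fun i => E C (- kap (x1.2 i) (x2.2 i) (x3.2 i)) *
   (Bc C (x1.2 i) (x2.2 i) I0 (x1.2 i) (x2.2 i) (x3.2 i))^*)); last first.
  by move=> i _; rewrite !ffunE -rmorphM Bc_assoc // rmorphM /= conjE.
rewrite !big_split /= !prodE hs1 hs2 hs3.
have kL := sum_kap hL; have kR := sum_kap hR.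
move: hn1 hn2 hn3; rewrite /nL => hn1 hn2 hn3.
set KL := \sum_(i < l) _ in kL *; set KR := \sum_(i < r) _ in kR *.
set PL := \prod_(i < l) _; set PR := \prod_(i < r) _.
rewrite sumrN.
have -> : E C (8 * m3) * (E C KL * PL * (E C (- KR) * PR)) =
   E C (8 * m3 + KL + - KR) * (PL * PR) by rewrite !ED; ring.
rewrite -ED (@Eeq C (8 * m3 + KL + - KR) (8 * m1 + 8 * m2) (2 * m3 - m1 - m2)); last first.
  move: kL kR hn1 hn2 hn3.
  set a1 := \sum_(i < l) w (x1.1 i); set a2 := \sum_(i < l) w (x2.1 i).
  set a3 := \sum_(i < l) w (x3.1 i); set b1 := \sum_(i < r) w (x1.2 i).
  set b2 := \sum_(i < r) w (x2.2 i); set b3 := \sum_(i < r) w (x3.2 i).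
  move=> ? ? ? ? ?; lia.
by congr (_ * (_ * _)); apply: eq_bigr => i _; rewrite ffunE.
Qed.

Lemma fusC a b c : fus a b c = fus b a c.
Proof. by case: a; case: b; case: c. Qed.
Lemma fus23 a b c : fus a b c = fus a c b.
Proof. by case: a; case: b; case: c; rewrite /fus ?IS_eqE. Qed.
Lemma fus_0 h : fus h I0 h.
Proof. by case: h; rewrite /fus ?IS_eqE. Qed.
Lemma fus_refl0 h : fus h h I0.
Proof. by case: h; rewrite /fus ?IS_eqE. Qed.
Lemma fus0 a b : fus a b I0 -> a = b.
Proof. by case: a; case: b; rewrite /fus ?IS_eqE. Qed.

Lemma forall_andb (T : finType) (P Q : pred T) :
  [forall i, P i && Q i] = [forall i, P i] && [forall i, Q i].
Proof.
apply/forallP/andP => [h|[/forallP h1 /forallP h2] i]; last by rewrite h1 h2.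
by split; apply/forallP => i; case/andP: (h i).
Qed.

Lemma AL_starL l r (x0 x1 x2 x3 x : Lam l r) :
  AL x0 x1 x2 x3 x = starL x2 x3 x && starL x1 x x0.
Proof. by rewrite /AL /starL /Aset1 !forall_andb andbACA. Qed.

Lemma starLC l r (x1 x2 x3 : Lam l r) : starL x1 x2 x3 = starL x2 x1 x3.
Proof. by rewrite /starL; congr andb; apply: eq_forallb => i; rewrite fusC. Qed.
Lemma starL23 l r (x1 x2 x3 : Lam l r) : starL x1 x2 x3 = starL x1 x3 x2.
Proof. by rewrite /starL; congr andb; apply: eq_forallb => i; rewrite fus23. Qed.
Lemma starL_0 l r (x : Lam l r) : starL x (lam0 l r) x.
Proof. by apply/andP; split; apply/forallP => i; rewrite ffunE fus_0. Qed.
Lemma starL_refl0 l r (x : Lam l r) : starL x x (lam0 l r).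
Proof. by apply/andP; split; apply/forallP => i; rewrite ffunE fus_refl0. Qed.
Lemma starL0 l r (x y : Lam l r) : starL x y (lam0 l r) -> x = y.
Proof.
case/andP => /forallP h1 /forallP h2; case: x h1 h2 => [x1 x2]; case: y => [y1 y2] /= h1 h2.
congr pair; apply/ffunP => i; apply: fus0; by [move: (h1 i); rewrite ffunE | move: (h2 i); rewrite ffunE].
Qed.

Lemma sum_single (T : finType) (M : nmodType) (P : pred T) (F : T -> M) x1 :
  P x1 -> (forall x, P x -> x != x1 -> F x = 0) -> \sum_(x | P x) F x = F x1.
Proof.
move=> Px h; rewrite (bigD1 x1) //= big1 ?addr0 // => x /andP[Px' ne]; exact: h.
Qed.

Section Alg.
Variables (C : numClosedFieldType) (l r : nat) (V : vectType C).
Variables (Sg : Lam l r -> {vspace V}) (mul : V -> V -> V) (one : V).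
Hypothesis H : framed_algebra Sg mul one.

Local Notation gc := (gcomp Sg).
Local Notation mc := (mulc Sg mul).
Local Notation z0 := (lam0 l r).

Lemma HS : (\sum_(mu : Lam l r) Sg mu)%VS = fullv.
Proof. by case: H => [[[]]]. Qed.
Lemma Hdir : directv (\sum_(mu : Lam l r) Sg mu).
Proof. by case: H => [[[]]]. Qed.
Lemma mulDZl k a a' b : mul (k *: a + a') b = k *: mul a b + mul a' b.
Proof. by case: H => [[_ []]]. Qed.
Lemma mulDZr k a b b' : mul a (k *: b + b') = k *: mul a b + mul a b'.
Proof. by case: H => [[_ []]]. Qed.
Lemma HFA1 x : sLam x \isn't a Num.int -> Sg x = 0%VS.
Proof. by case: H => _ h _ _ _; apply: h. Qed.
Lemma Hone : one != 0. Proof. by case: H => _ _ []. Qed.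
Lemma HS0 : Sg z0 = <[one]>%VS. Proof. by case: H => _ _ []. Qed.
Lemma mul1 a : mul one a = a. Proof. by case: H => _ _ [_ _ h]; case: (h a). Qed.
Lemma mulr1' a : mul a one = a. Proof. by case: H => _ _ [_ _ h]; case: (h a). Qed.
Lemma HFA3 x1 x2 a1 a2 : a1 \in Sg x1 -> a2 \in Sg x2 ->
  mul a1 a2 \in (\sum_(x | starL x1 x2 x) Sg x)%VS.
Proof. by case: H => _ _ _ h _; apply: h. Qed.
Lemma HFA4 x0 x1 x2 x3 x' a1 a2 a3 :
  a1 \in Sg x1 -> a2 \in Sg x2 -> a3 \in Sg x3 -> AL x0 x2 x1 x3 x' ->
  mc x0 a2 (mc x' a1 a3) =
  \sum_(x | AL x0 x1 x2 x3 x) BL C x x' x0 x1 x2 x3 *: mc x0 a1 (mc x a2 a3).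
Proof. by case: H => _ _ _ _ h; apply: h. Qed.

Lemma mulDl a a' b : mul (a + a') b = mul a b + mul a' b.
Proof. by rewrite -[a in LHS]scale1r mulDZl scale1r. Qed.
Lemma mulDr a b b' : mul a (b + b') = mul a b + mul a b'.
Proof. by rewrite -[b in LHS]scale1r mulDZr scale1r. Qed.
Lemma mul0l b : mul 0 b = 0.
Proof. by apply: (addrI (mul 0 b)); rewrite addr0 -mulDl addr0. Qed.
Lemma mul0r a : mul a 0 = 0.
Proof. by apply: (addrI (mul a 0)); rewrite addr0 -mulDr addr0. Qed.
Lemma mulZl k a b : mul (k *: a) b = k *: mul a b.
Proof. by rewrite -[_ *: a]addr0 mulDZl mul0l addr0. Qed.
Lemma mulZr k a b : mul a (k *: b) = k *: mul a b.
Proof. by rewrite -[_ *: b]addr0 mulDZr mul0r addr0. Qed.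
Lemma mul_suml (I : finType) (P : pred I) (f : I -> V) b :
  mul (\sum_(i | P i) f i) b = \sum_(i | P i) mul (f i) b.
Proof. exact: (big_morph (fun a => mul a b) (fun a a' => mulDl a a' b) (mul0l b)). Qed.
Lemma mul_sumr (I : finType) (P : pred I) (f : I -> V) a :
  mul a (\sum_(i | P i) f i) = \sum_(i | P i) mul a (f i).
Proof. exact: (big_morph (fun b => mul a b) (fun b b' => mulDr a b b') (mul0r a)). Qed.

Lemma gc_in x v : gc x v \in Sg x.
Proof. exact: memv_sum_pi. Qed.

Lemma gc_sum v : \sum_x gc x v = v.
Proof. by apply: sumv_pi_sum; rewrite HS memvf. Qed.

Lemma gc_hom x y v : v \in Sg y -> gc x v = if x == y then v else 0.
Proof.
move=> vy; have U := elimT directv_sum_unique Hdir.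
have Hv : forall i, true -> (if i == y then v else 0) \in Sg i.
  by move=> i _; case: eqP => [->|]; rewrite ?mem0v.
have := U (fun i => gc i v) (fun i => if i == y then v else 0) (fun i _ => gc_in i v) _.
  rewrite gc_sum (sum_single (x1 := y)) ?eqxx //; last by move=> i _ /negPf ->.
by move/(_ Hv)/esym/forallP/(_ x)/implyP/(_ isT)/eqP.
Qed.

Lemma gc_sum0 (P : pred (Lam l r)) v y :
  v \in (\sum_(x | P x) Sg x)%VS -> ~~ P y -> gc y v = 0.
Proof.
case/memv_sumP => us Hus -> nPy; rewrite linear_sum big1 // => i Pi /=.
rewrite /= (gc_hom _ (Hus i Pi)); case: eqP => // eyi.
by rewrite eyi Pi in nPy.
Qed.

Lemma gc_id x v : v \in Sg x -> gc x v = v.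
Proof. by move/(gc_hom x); rewrite eqxx. Qed.

Lemma mc0l x b : mc x 0 b = 0. Proof. by rewrite /mulc mul0l linear0. Qed.
Lemma mc0r x a : mc x a 0 = 0. Proof. by rewrite /mulc mul0r linear0. Qed.
Lemma mcZl x k a b : mc x (k *: a) b = k *: mc x a b.
Proof. by rewrite /mulc mulZl linearZ. Qed.
Lemma mcZr x k a b : mc x a (k *: b) = k *: mc x a b.
Proof. by rewrite /mulc mulZr linearZ. Qed.
Lemma mc_suml x (I : finType) (P : pred I) (f : I -> V) b :
  mc x (\sum_(i | P i) f i) b = \sum_(i | P i) mc x (f i) b.
Proof. by rewrite /mulc mul_suml linear_sum. Qed.
Lemma mc_sumr x (I : finType) (P : pred I) (f : I -> V) a :
  mc x a (\sum_(i | P i) f i) = \sum_(i | P i) mc x a (f i).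
Proof. by rewrite /mulc mul_sumr linear_sum. Qed.
Lemma mc_in x a b : mc x a b \in Sg x. Proof. exact: gc_in. Qed.

Lemma mc_grade x1 x2 z a1 a2 : a1 \in Sg x1 -> a2 \in Sg x2 -> ~~ starL x1 x2 z ->
  mc z a1 a2 = 0.
Proof. by move=> h1 h2; apply: gc_sum0; apply: HFA3. Qed.

Lemma mc0_neq x y a b : a \in Sg x -> b \in Sg y -> x != y -> mc z0 a b = 0.
Proof.
move=> ha hb nxy; apply: (mc_grade ha hb); apply: contra nxy => /starL0 ->.
by rewrite eqxx.
Qed.

Lemma mc_one x a : mc x a one = gc x a.
Proof. by rewrite /mulc mulr1'. Qed.

Lemma comm mu x1 x2 a1 a2 : a1 \in Sg x1 -> a2 \in Sg x2 -> starL x1 x2 mu ->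
  mc mu a2 a1 = BL C x2 x1 mu x1 x2 z0 *: mc mu a1 a2.
Proof.
move=> h1 h2 s12.
have h3 : one \in Sg z0 by rewrite HS0 memv_line.
have := @HFA4 mu x1 x2 z0 x1 a1 a2 one h1 h2 h3.
rewrite AL_starL starL_0 starLC s12 => /(_ isT).
rewrite mc_one gc_id // => ->.
rewrite (sum_single (x1 := x2)); first by rewrite mc_one gc_id.
  by rewrite AL_starL starL_0.
move=> x _ nx; rewrite mc_one (gc_hom _ h2) (negPf nx) mc0r scaler0 //.
Qed.

Lemma zero_of_nonint x a : a \in Sg x -> sLam x \isn't a Num.int -> a = 0.
Proof. by move=> ha /HFA1 e; move: ha; rewrite e memv0 => /eqP. Qed.

Lemma scal0_lin k u v : scal0 one (k *: u + v) = k * scal0 one u + scal0 one v.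
Proof. by rewrite /scal0 linearP. Qed.
Lemma scal0_0 : scal0 one 0 = 0. Proof. by rewrite /scal0 linear0. Qed.
Lemma scal0Z k v : scal0 one (k *: v) = k * scal0 one v.
Proof. by rewrite /scal0 linearZ. Qed.
Lemma scal0_one : scal0 one one = 1.
Proof.
rewrite /scal0; have := @coord_free _ _ 1 [tuple one] ord0 ord0; rewrite [ord0 == ord0]eqxx => -> //.
by rewrite seq1_free Hone.
Qed.
Lemma scal0K v : v \in Sg z0 -> v = scal0 one v *: one.
Proof.
rewrite HS0 -span_seq1 => /coord_span {1}->; rewrite big_ord1.
by [].
Qed.

Lemma starL_perm (x1 x2 x3 : Lam l r) : starL x1 x2 x3 ->
  [/\ starL x1 x3 x2, starL x2 x1 x3, starL x2 x3 x1, starL x3 x1 x2 & starL x3 x2 x1].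
Proof.
move=> s; split.
- by rewrite -starL23.
- by rewrite -starLC.
- by rewrite -starL23 -starLC.
- by rewrite starLC -starL23.
- by rewrite starLC -starL23 -starLC.
Qed.

Local Notation bf := (bform Sg mul one).

Lemma bform_hom x a b : a \in Sg x -> bf a b = signL C x * scal0 one (mc z0 a b).
Proof.
move=> ha; rewrite /bform (sum_single (x1 := x)) //= ?gc_id // => y _ ny.
by rewrite (gc_hom _ ha) (negPf ny) mc0l scal0_0 mulr0.
Qed.

Lemma bform_linl k a a' b : bf (k *: a + a') b = k * bf a b + bf a' b.
Proof.
rewrite /bform mulr_sumr -big_split; apply: eq_bigr => x _ /=.
by rewrite linearP /= /mulc mulDZl linearP /= scal0_lin mulrDr mulrCA.
Qed.
Lemma bform_linr k a b b' : bf a (k *: b + b') = k * bf a b + bf a b'.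
Proof.
rewrite /bform mulr_sumr -big_split; apply: eq_bigr => x _ /=.
by rewrite /mulc mulDZr linearP /= scal0_lin mulrDr mulrCA.
Qed.
Lemma bf0l b : bf 0 b = 0.
Proof. by rewrite /bform big1 // => x _; rewrite linear0 mc0l scal0_0 mulr0. Qed.
Lemma bf0r a : bf a 0 = 0.
Proof. by rewrite /bform big1 // => x _; rewrite mc0r scal0_0 mulr0. Qed.
Lemma bformDl a a' b : bf (a + a') b = bf a b + bf a' b.
Proof. by rewrite -[a in LHS]scale1r bform_linl mul1r. Qed.
Lemma bformDr a b b' : bf a (b + b') = bf a b + bf a b'.
Proof. by rewrite -[b in LHS]scale1r bform_linr mul1r. Qed.
Lemma bform_suml (I : finType) (P : pred I) (f : I -> V) b :
  bf (\sum_(i | P i) f i) b = \sum_(i | P i) bf (f i) b.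
Proof. exact: (big_morph (fun a => bf a b) (fun a a' => bformDl a a' b) (bf0l b)). Qed.
Lemma bform_sumr (I : finType) (P : pred I) (f : I -> V) a :
  bf a (\sum_(i | P i) f i) = \sum_(i | P i) bf a (f i).
Proof. exact: (big_morph (fun b => bf a b) (fun b b' => bformDr a b b') (bf0r a)). Qed.

Lemma orth x1 x2 a1 a2 : x1 != x2 -> a1 \in Sg x1 -> a2 \in Sg x2 -> bf a1 a2 = 0.
Proof. by move=> n h1 h2; rewrite (bform_hom _ h1) (mc0_neq h1 h2 n) scal0_0 mulr0. Qed.

Lemma sym_hom x y a b : a \in Sg x -> b \in Sg y -> bf a b = bf b a.
Proof.
move=> ha hb; have [exy|nxy] := eqVneq x y; last first.
  by rewrite (orth nxy ha hb) (orth _ hb ha) // eq_sym.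
move: hb; rewrite -exy => hb.
have [xi|xn] := boolP (sLam x \is a Num.int); last first.
  by rewrite (zero_of_nonint ha xn) (zero_of_nonint hb xn).
rewrite (bform_hom _ ha) (bform_hom _ hb) (comm ha hb (starL_refl0 x)) BL_sym //.
by rewrite scale1r.
Qed.

Lemma bform_expand a b : bf a b = \sum_x \sum_y bf (gc x a) (gc y b).
Proof.
rewrite -{1}(gc_sum a) bform_suml; apply: eq_bigr => x _.
by rewrite -{1}(gc_sum b) bform_sumr.
Qed.

Lemma bform_sym a b : bf a b = bf b a.
Proof.
rewrite bform_expand [RHS]bform_expand exchange_big; apply: eq_bigr => x _.
by apply: eq_bigr => y _; apply: sym_hom; apply: gc_in.
Qed.

Lemma inv3 x1 x2 x3 a1 a2 a3 : a1 \in Sg x1 -> a2 \in Sg x2 -> a3 \in Sg x3 ->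
  bf (mul a1 a2) a3 = signL C x1 * bf a2 (mul a1 a3).
Proof.
move=> h1 h2 h3.
have [i1|n1] := boolP (sLam x1 \is a Num.int); last first.
  by rewrite (zero_of_nonint h1 n1) !mul0l bf0l bf0r mulr0.
have [i2|n2] := boolP (sLam x2 \is a Num.int); last first.
  by rewrite (zero_of_nonint h2 n2) mul0r !bf0l mulr0.
have [i3|n3] := boolP (sLam x3 \is a Num.int); last first.
  by rewrite (zero_of_nonint h3 n3) mul0r !bf0r mulr0.
have L : bf (mul a1 a2) a3 = signL C x3 * scal0 one (mc z0 (mc x3 a1 a2) a3).
  rewrite -(gc_sum (mul a1 a2)) bform_suml (sum_single (x1 := x3)) //.
    by rewrite (bform_hom _ (gc_in _ _)).
  by move=> x _ nx; apply: orth nx (gc_in _ _) h3.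
have R : bf a2 (mul a1 a3) = signL C x2 * scal0 one (mc z0 a2 (mc x2 a1 a3)).
  rewrite -(gc_sum (mul a1 a3)) bform_sumr (sum_single (x1 := x2)) //.
    by rewrite (bform_hom _ h2).
  by move=> x _ nx; apply: orth h2 (gc_in _ _); rewrite eq_sym.
rewrite L R.
have [s123|ns] := boolP (starL x1 x2 x3); last first.
  have ns' : ~~ starL x1 x3 x2 by rewrite -starL23.
  by rewrite (mc_grade h1 h2 ns) mc0l (mc_grade h1 h3 ns') !mc0r !scal0_0 !mulr0.
have [s132 s213 s231 s312 s321] := starL_perm s123.
have hY : mc x3 a1 a2 \in Sg x3 by apply: mc_in.
rewrite (comm h3 hY (starL_refl0 x3)) BL_sym // scale1r.
rewrite (@HFA4 z0 x1 x3 x2 x3 a1 a3 a2 h1 h3 h2); last by rewrite AL_starL s123 starL_refl0.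
rewrite (sum_single (x1 := x1)); last first.
    move=> x _ nx; rewrite (mc0_neq h1 (mc_in _ _ _) (_ : x1 != x)) ?scaler0 //.
    by rewrite eq_sym.
  by rewrite AL_starL starL_refl0 s321.
rewrite (comm h2 h3 s231) mcZr !scal0Z.
rewrite (@HFA4 z0 x1 x2 x3 x2 a1 a2 a3 h1 h2 h3); last by rewrite AL_starL s132 starL_refl0.
rewrite (sum_single (x1 := x1)); last first.
    move=> x _ nx; rewrite (mc0_neq h1 (mc_in _ _ _) (_ : x1 != x)) ?scaler0 //.
    by rewrite eq_sym.
  by rewrite AL_starL starL_refl0 s231.
rewrite scal0Z.
have HB := BL_assoc C i1 i2 i3 s123.
set B1 := BL C x1 x3 z0 x1 x3 x2 in HB *; set B2 := BL C x3 x2 x1 x2 x3 z0 in HB *.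
set B3 := BL C x1 x2 z0 x1 x2 x3 in HB *.
set X := scal0 one _.
transitivity (signL C x3 * (B1 * B2) * X); first ring.
by rewrite HB; ring.
Qed.

Lemma bformZr k a b : bf a (k *: b) = k * bf a b.
Proof. by rewrite -[k *: b]addr0 bform_linr bf0r addr0. Qed.

Lemma bf_gc x a b : bf (gc x a) b = bf a (gc x b).
Proof.
rewrite -{1}(gc_sum b) bform_sumr (sum_single (x1 := x)) //; last first.
  by move=> y _ ny; apply: orth (gc_in _ _) (gc_in _ _); rewrite eq_sym.
rewrite -{2}(gc_sum a) bform_suml (sum_single (x1 := x)) //.
by move=> y _ ny; apply: orth (gc_in _ _) (gc_in _ _).
Qed.

Definition nV := \dim (fullv : {vspace V}).
Definition BB := vbasis (fullv : {vspace V}).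
Definition radf (v : V) : 'rV[C]_nV := \row_i bf v BB`_i.
Fact radf_lin : linear radf.
Proof. by move=> k u v; apply/rowP => i; rewrite !mxE bform_linl. Qed.
HB.instance Definition _ := GRing.isLinear.Build C V 'rV[C]_nV *:%R radf radf_lin.

Definition Rad : {vspace V} := lker (linfun radf).

Lemma radP v : reflect (forall b, bf v b = 0) (v \in Rad).
Proof.
rewrite memv_ker lfunE /=; apply: (iffP eqP) => [h b | h].
  rewrite (coord_vbasis (memvf b)) bform_sumr big1 // => i _.
  by rewrite bformZr; move/rowP: h => /(_ i); rewrite !mxE => ->; rewrite mulr0.
by apply/rowP => i; rewrite !mxE h.
Qed.

Lemma sLam0 : sLam z0 = 0.
Proof. by rewrite /sLam !big1 ?subrr // => i _; rewrite ffunE. Qed.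

Lemma bf_one : bf one one = 1.
Proof.
have h : one \in Sg z0 by rewrite HS0 memv_line.
rewrite (bform_hom _ h) /mulc mul1 gc_id // scal0_one mulr1.
by rewrite /signL sLam0.
Qed.

Lemma gc_M (M : {vspace V}) x m : graded_subspace Sg M -> m \in M -> gc x m \in M.
Proof.
rewrite /graded_subspace => Mg; rewrite {1}Mg => /memv_sumP [us Hus ->].
rewrite linear_sum (sum_single (x1 := x)) //=.
  by rewrite (gc_id (memv_capP (Hus x isT)).2); exact: (memv_capP (Hus x isT)).1.
move=> y _ ny /=; rewrite (gc_hom _ (memv_capP (Hus y isT)).2).
by rewrite eq_sym (negPf ny).
Qed.

Lemma Rad_ideal : graded_ideal Sg mul Rad.
Proof.
have Rgc y m : m \in Rad -> gc y m \in Rad.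
  by move/radP => hm; apply/radP => b; rewrite bf_gc hm.
split.
  apply/eqP; rewrite eqEsubv; apply/andP; split; last first.
    by apply/subv_sumP => x _; apply: capvSl.
  apply/subvP => v hv; rewrite -(gc_sum v); apply: memv_sumr => x _.
  by rewrite memv_cap gc_in Rgc.
move=> a m hm; apply/radP => b.
rewrite -(gc_sum a) mul_suml bform_suml big1 // => x _.
rewrite -(gc_sum m) mul_sumr bform_suml big1 // => y _.
rewrite -(gc_sum b) bform_sumr big1 // => z _.
rewrite (inv3 (gc_in x a) (gc_in y m) (gc_in z b)).
by have /radP -> := Rgc y m hm; rewrite mulr0.
Qed.

Lemma nondeg_iff : nondeg_bform Sg mul one <-> simple_alg Sg mul.
Proof.
split => [Hn M [Mg Mi] | Hs a ha].
  have [->|M0] := eqVneq M 0%VS; [by left | right].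
  have [/existsP [x hx] | /existsPn hall] := boolP [exists x, (M :&: Sg x)%VS != 0%VS];
    last first.
    by move: M0; rewrite Mg big1 ?eqxx // => x _; apply/eqP; move: (hall x); rewrite negbK.
  set a := vpick (M :&: Sg x)%VS.
  have a0 : a != 0 by rewrite vpick0.
  have /memv_capP [aM ax] : a \in (M :&: Sg x)%VS by apply: memv_pick.
  have [/forallP hi | /forallPn [i hi]] := boolP [forall i : 'I_nV, bf a BB`_i == 0].
    have : a \in Rad by rewrite memv_ker lfunE /=; apply/eqP/rowP => i; rewrite !mxE (eqP (hi i)).
    move/radP/Hn => a00; by rewrite a00 eqxx in a0.
  rewrite bform_sym in hi; move: hi; set b := BB`_i => hi.
  have [/forallP hy | /forallPn [y hy]] :=
    boolP [forall y, signL C y * scal0 one (mc z0 (gc y b) a) == 0].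
    by move: hi; rewrite /bform big1 ?eqxx // => y _; apply/eqP.
  have hc : scal0 one (mc z0 (gc y b) a) != 0.
    by apply: contra hy => /eqP ->; rewrite mulr0.
  set c := mc z0 (gc y b) a in hc.
  have cM : c \in M by apply: gc_M => //; apply: Mi.
  have c0 : c \in Sg z0 by apply: mc_in.
  have oneM : one \in M.
    have := memvZ (scal0 one c)^-1 cM; rewrite {2}(scal0K c0) scalerA mulVf //.
    by rewrite scale1r.
  apply/vspaceP => v; rewrite memvf -(mulr1' v); exact: Mi.
have aR : a \in Rad by apply/radP.
case: (Hs Rad Rad_ideal) => [R0 | Rf].
  by move: aR; rewrite R0 memv0 => /eqP.
have : one \in Rad by rewrite Rf memvf.
by move/radP/(_ one); rewrite bf_one => /eqP; rewrite oner_eq0.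
Qed.

End Alg.

Theorem mainTheorem3 (C : numClosedFieldType) (l r : nat) (V : vectType C)
    (Sg : Lam l r -> {vspace V}) (mul : V -> V -> V) (one : V) :
  framed_algebra Sg mul one ->
  [/\ (* (1) orthogonality of distinct graded pieces *)
      (forall x1 x2 a1 a2, x1 != x2 -> a1 \in Sg x1 -> a2 \in Sg x2 ->
         bform Sg mul one a1 a2 = 0),
      (* (2) symmetry *)
      (forall a b, bform Sg mul one a b = bform Sg mul one b a),
      (* (3) invariance *)
      (forall x1 x2 x3 a1 a2 a3, a1 \in Sg x1 -> a2 \in Sg x2 -> a3 \in Sg x3 ->
         bform Sg mul one (mul a1 a2) a3 =
         signL C x1 * bform Sg mul one a2 (mul a1 a3)) &
      (* (4) non-degenerate iff simple *)
      (nondeg_bform Sg mul one <-> simple_alg Sg mul)].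
Proof.
move=> H; split.
- by move=> x1 x2 a1 a2; apply: orth.
- exact: bform_sym.
- by move=> x1 x2 x3 a1 a2 a3; apply: inv3.
- exact: nondeg_iff.
Qed.
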